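(* Let $(X,T)$ be a topological dynamical system and $\mu$ a $T$-invariant Borel probability measure on $X$. Then $\mu$ has bounded complexity with respect to $\{\bar d_n\}$ if and only if $\mu$ has bounded complexity with respect to $\{\hat d_n\}$.
   Context: A t.d.s. $(X,T)$ consists of a compact metric space $(X,d)$ and a continuous map $T\colon X\to X$. Let $\bar d_n(x,y)=\frac1n\sum_{i=0}^{n-1}d(T^ix,T^iy)$ and $\hat d_n(x,y)=\max\{\bar d_k(x,y)\colon1\le k\le n\}$. For $\rho_n\in\{\bar d_n,\hat d_n\}$ let $B_{\rho_n}(x,\varepsilon)=\{y\colon\rho_n(x,y)<\varepsilon\}$ and $\mathrm{span}^{\rho}_\mu(n,\varepsilon)=\min\{\#(F)\colon F\subset X,\ \mu(\bigcup_{x\in F}B_{\rho_n}(x,\varepsilon))>1-\varepsilon\}$. $\mu$ has bounded complexity with respect to $\{\rho_n\}$ if for every $\varepsilon>0$ there is a positive integer $C$ with $\mathrm{span}^{\rho}_\mu(n,\varepsilon)\le C$ for all $n\ge1$. *)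

(* Defs.v *)
From Stdlib Require Import Reals Lra List.
Open Scope R_scope.

Section TDS.
Variable X : Type.

Definition is_metric (d : X -> X -> R) : Prop :=
  (forall x y, 0 <= d x y) /\
  (forall x y, d x y = 0 <-> x = y) /\
  (forall x y, d x y = d y x) /\
  (forall x y z, d x z <= d x y + d y z).

Definition open_set (d : X -> X -> R) (A : X -> Prop) : Prop :=
  forall x, A x -> exists r, 0 < r /\ forall y, d x y < r -> A y.

Definition compact_space (d : X -> X -> R) : Prop :=
  forall (I : Type) (U : I -> X -> Prop),
    (forall i, open_set d (U i)) -> (forall x, exists i, U i x) ->
    exists l : list I, forall x, exists i, In i l /\ U i x.

Definition continuous_map (d : X -> X -> R) (T : X -> X) : Prop :=
  forall x eps, 0 < eps -> exists delta, 0 < delta /\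
    forall y, d x y < delta -> d (T x) (T y) < eps.

Inductive borel (d : X -> X -> R) : (X -> Prop) -> Prop :=
| borel_open : forall A, open_set d A -> borel d A
| borel_compl : forall A, borel d A -> borel d (fun x => ~ A x)
| borel_union : forall A : nat -> X -> Prop, (forall n, borel d (A n)) ->
    borel d (fun x => exists n, A n x).

Definition borel_prob_measure (d : X -> X -> R) (mu : (X -> Prop) -> R) : Prop :=
  (forall A, borel d A -> 0 <= mu A) /\
  mu (fun _ => True) = 1 /\
  (forall A : nat -> X -> Prop,
     (forall n, borel d (A n)) ->
     (forall m n x, m <> n -> A m x -> A n x -> False) ->
     infinite_sum (fun n => mu (A n)) (mu (fun x => exists n, A n x))).

Definition invariant_measure (d : X -> X -> R) (T : X -> X) (mu : (X -> Prop) -> R) : Prop :=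
  forall A, borel d A -> mu (fun x => A (T x)) = mu A.

Definition dbar (d : X -> X -> R) (T : X -> X) (n : nat) (x y : X) : R :=
  / INR n * sum_f_R0 (fun i => d (Nat.iter i T x) (Nat.iter i T y)) (n - 1).

Definition dhat (d : X -> X -> R) (T : X -> X) (n : nat) (x y : X) : R :=
  fold_right Rmax (dbar d T 1 x y) (map (fun k => dbar d T k x y) (seq 1 n)).

Definition ball_union (rho : nat -> X -> X -> R) (n : nat) (eps : R)
  (F : list X) : X -> Prop :=
  fun y => exists x, In x F /\ rho n x y < eps.

(* span^rho_mu(n,eps) <= C, i.e. the minimum in the definition of span is
   at most C: some F with #F <= C has mu(union of balls) > 1 - eps *)
Definition span_le (rho : nat -> X -> X -> R) (mu : (X -> Prop) -> R)
  (n : nat) (eps : R) (C : nat) : Prop :=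
  exists F : list X, NoDup F /\ (length F <= C)%nat /\
    mu (ball_union rho n eps F) > 1 - eps.

Definition bounded_complexity (rho : nat -> X -> X -> R) (mu : (X -> Prop) -> R) : Prop :=
  forall eps, 0 < eps -> exists C : nat, (1 <= C)%nat /\
    forall n, (1 <= n)%nat -> span_le rho mu n eps C.

End TDS.

(* Main.v *)
Require Import Defs.
From Stdlib Require Import Reals List Lra Lia ZArith.
From Stdlib Require Import FunctionalExtensionality PropExtensionality Classical ClassicalEpsilon.
Open Scope R_scope.

Lemma set_ext {X : Type} (A B : X -> Prop) : (forall x, A x <-> B x) -> A = B.
Proof. intros H; apply functional_extensionality; intro x; apply propositional_extensionality; auto. Qed.

Section Meas.
Variable X : Type.
Variable d : X -> X -> R.
Variable mu : (X -> Prop) -> R.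
Hypothesis Hmu : borel_prob_measure X d mu.

Lemma borel_ext A B : borel X d A -> (forall x, A x <-> B x) -> borel X d B.
Proof. intros H E; rewrite <- (set_ext _ _ E); exact H. Qed.

Lemma borel_empty : borel X d (fun _ => False).
Proof. apply borel_open; intros x []. Qed.

Lemma borel_full : borel X d (fun _ => True).
Proof. apply borel_open; intros x _; exists 1; split; [lra|auto]. Qed.

Lemma borel_or A B : borel X d A -> borel X d B -> borel X d (fun x => A x \/ B x).
Proof.
  intros HA HB.
  apply borel_ext with (fun x => exists n, (match n with O => A | _ => B end) x).
  - apply borel_union; intros [|n]; auto.
  - intro x; split.
    + intros [[|n] H]; auto.
    + intros [H|H]; [exists O|exists 1%nat]; auto.
Qed.

Lemma borel_not A : borel X d A -> borel X d (fun x => ~ A x).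
Proof. apply borel_compl. Qed.

Lemma borel_and A B : borel X d A -> borel X d B -> borel X d (fun x => A x /\ B x).
Proof.
  intros HA HB.
  apply borel_ext with (fun x => ~ (~ A x \/ ~ B x)).
  - apply borel_not, borel_or; apply borel_not; auto.
  - intro x; tauto.
Qed.

Lemma mu_ext A B : (forall x, A x <-> B x) -> mu A = mu B.
Proof. intro E; rewrite (set_ext _ _ E); reflexivity. Qed.

Lemma mu_empty : mu (fun _ => False) = 0.
Proof.
  destruct Hmu as [H0 [H1 H2]].
  assert (Hs := H2 (fun _ _ => False) (fun _ => borel_empty) (fun m n x _ h _ => h)). cbv beta in Hs.
  rewrite (mu_ext (fun x => exists n : nat, False) (fun _ => False)) in Hs
    by (intro; split; [intros [_ []]|intros []]).
  set (c := mu (fun _ => False)) in *.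
  unfold infinite_sum in Hs.
  assert (forall n, sum_f_R0 (fun _ => c) n = INR (S n) * c).
  { induction n; simpl sum_f_R0. simpl; ring. rewrite IHn. rewrite !S_INR. ring. }
  destruct (Req_dec c 0) as [E|E]; auto.
  destruct (Hs (Rabs c / 2)) as [N HN]. { apply Rabs_pos_lt in E; lra. }
  assert (A1 := HN (S N) (le_S _ _ (le_n _))).
  assert (A2 := HN N (le_n _)).
  rewrite H in A1, A2. unfold Rdist in *.
  assert (Rabs (INR (S (S N)) * c - c - (INR (S N) * c - c)) <= Rabs (INR (S (S N)) * c - c) + Rabs (INR (S N) * c - c)).
  { replace (INR (S (S N)) * c - c - (INR (S N) * c - c)) with ((INR (S (S N)) * c - c) + - (INR (S N) * c - c)) by ring.
    eapply Rle_trans; [apply Rabs_triang|]. rewrite Rabs_Ropp; lra. }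
  replace (INR (S (S N)) * c - c - (INR (S N) * c - c)) with c in H3 by (rewrite (S_INR (S N)); ring).
  lra.
Qed.

Lemma mu_add A B : borel X d A -> borel X d B -> (forall x, A x -> B x -> False) ->
  mu (fun x => A x \/ B x) = mu A + mu B.
Proof.
  intros HA HB Hd.
  destruct Hmu as [H0 [H1 H2]].
  set (S := fun n => match n with O => A | 1%nat => B | _ => fun _ : X => False end).
  assert (Hs := H2 S).
  rewrite (mu_ext (fun x => exists n, S n x) (fun x => A x \/ B x)) in Hs.
  2:{ intro x; split. intros [[|[|n]] h]; simpl in h; tauto.
      intros [h|h]; [exists O|exists 1%nat]; exact h. }
  assert (Hs' : infinite_sum (fun n => mu (S n)) (mu (fun x => A x \/ B x))).
  { apply Hs. intros [|[|n]]; simpl; auto using borel_empty.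
    intros [|[|m]] [|[|n]] x Hmn; simpl; try tauto; try (intros; eapply Hd; eauto). }
  assert (Hp : forall n, (1 <= n)%nat -> sum_f_R0 (fun n => mu (S n)) n = mu A + mu B).
  { induction n; intro Hn. lia. destruct n. simpl. reflexivity.
    simpl sum_f_R0 in *. rewrite IHn by lia. simpl. rewrite mu_empty. ring. }
  apply (uniqueness_sum (fun n => mu (S n))); auto.
  intros e He; exists 1%nat; intros n Hn; rewrite Hp by lia. unfold Rdist. rewrite Rminus_diag, Rabs_R0; auto.
Qed.

Lemma mu_nonneg A : borel X d A -> 0 <= mu A.
Proof. destruct Hmu as [H0 _]; auto. Qed.

Lemma mu_mono A B : borel X d A -> borel X d B -> (forall x, A x -> B x) -> mu A <= mu B.
Proof.
  intros HA HB Hs.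
  rewrite (mu_ext B (fun x => A x \/ (B x /\ ~ A x))).
  2:{ intro x; split; [intro h; destruct (classic (A x)); tauto| intros [h|[h _]]; auto]. }
  rewrite mu_add; auto.
  - assert (0 <= mu (fun x => B x /\ ~ A x)); [apply mu_nonneg, borel_and; auto using borel_not|lra].
  - apply borel_and; auto using borel_not.
  - intros x a [_ b]; auto.
Qed.

End Meas.

Fixpoint Ssum (f : nat -> R) (n : nat) : R :=
  match n with O => 0 | S n => Ssum f n + f n end.

Lemma Ssum_f_R0 f k : (1 <= k)%nat -> sum_f_R0 f (k - 1) = Ssum f k.
Proof.
  intro H; destruct k. lia. replace (S k - 1)%nat with k by lia. clear H.
  induction k. simpl; ring. simpl sum_f_R0. rewrite IHk. simpl. reflexivity.
Qed.

Lemma Ssum_le f g n : (forall i, (i < n)%nat -> f i <= g i) -> Ssum f n <= Ssum g n.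
Proof. induction n; intro H; simpl. lra. assert (H1 := H n (Nat.lt_succ_diag_r n)). assert (Ssum f n <= Ssum g n) by (apply IHn; intros; apply H; lia). lra. Qed.

Lemma Ssum_plus f g n : Ssum (fun i => f i + g i) n = Ssum f n + Ssum g n.
Proof. induction n; simpl. ring. rewrite IHn; ring. Qed.

Lemma Ssum_const c n : Ssum (fun _ => c) n = INR n * c.
Proof. induction n; simpl Ssum. simpl; ring. rewrite IHn, S_INR; ring. Qed.

Lemma Ssum_add f a b : Ssum f (a + b) = Ssum f a + Ssum (fun i => f (a + i)%nat) b.
Proof. induction b; simpl. rewrite Nat.add_0_r; ring. rewrite Nat.add_succ_r. simpl. rewrite IHb; ring. Qed.

Lemma Ssum_ext f g n : (forall i, (i < n)%nat -> f i = g i) -> Ssum f n = Ssum g n.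
Proof. intro H; induction n; simpl; auto. rewrite IHn by (intros; apply H; lia). rewrite H by lia; auto. Qed.

Lemma iter_add {A} (f : A -> A) i j x : Nat.iter (i + j) f x = Nat.iter i f (Nat.iter j f x).
Proof. induction i; simpl; auto. rewrite IHi; auto. Qed.

Lemma fold_max_lt (f : nat -> R) a l e :
  fold_right Rmax a (map f l) < e <-> a < e /\ forall k, In k l -> f k < e.
Proof.
  induction l; simpl. split; [intro; split; auto; intros _ []| tauto].
  destruct IHl as [I1 I2]. split.
  - intro h. assert (h1 := Rmax_l (f a0) (fold_right Rmax a (map f l))).
    assert (h2 := Rmax_r (f a0) (fold_right Rmax a (map f l))).
    destruct (I1 ltac:(lra)) as [q1 q2]. split; auto. intros k [<-|hk]; [lra|auto].
  - intros [h1 h2]. apply Rmax_lub_lt. apply h2; auto. apply I2; split; auto.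
Qed.

Lemma fold_max_ge (f : nat -> R) a l :
  a <= fold_right Rmax a (map f l) /\ forall k, In k l -> f k <= fold_right Rmax a (map f l).
Proof.
  induction l; simpl. split. lra. intros _ [].
  destruct IHl as [h1 h2]. split.
  eapply Rle_trans; [exact h1| apply Rmax_r].
  intros k [<-|hk]. apply Rmax_l. eapply Rle_trans; [apply h2; auto| apply Rmax_r].
Qed.

Section Top.
Variable X : Type.
Variable d : X -> X -> R.
Variable T : X -> X.
Hypothesis Htri : forall x y z, d x z <= d x y + d y z.
Hypothesis Hcont : continuous_map X d T.

Lemma dhat_lt m x y e : dhat X d T m x y < e <->
  dbar X d T 1 x y < e /\ forall k, (1 <= k <= m)%nat -> dbar X d T k x y < e.
Proof.
  unfold dhat. rewrite fold_max_lt. split; intros [h1 h2]; split; auto; intros k hk; apply h2;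
  rewrite in_seq in *; lia.
Qed.

Lemma dhat_ge m x y k : (1 <= k <= m)%nat \/ k = 1%nat -> dbar X d T k x y <= dhat X d T m x y.
Proof.
  destruct (fold_max_ge (fun k => dbar X d T k x y) (dbar X d T 1 x y) (seq 1 m)) as [h1 h2].
  intros [h|e]; [apply h2; rewrite in_seq; lia | subst; exact h1].
Qed.

Lemma dbar_eq k x y : (1 <= k)%nat ->
  dbar X d T k x y = / INR k * Ssum (fun i => d (Nat.iter i T x) (Nat.iter i T y)) k.
Proof. intro h; unfold dbar; rewrite Ssum_f_R0; auto. Qed.

Lemma dbar_close k x y z eta : 0 < eta ->
  (forall i, (i < k)%nat -> d (Nat.iter i T y) (Nat.iter i T z) < eta) ->
  dbar X d T k x z <= dbar X d T k x y + eta.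
Proof.
  intros he h. destruct k.
  - unfold dbar. simpl INR. rewrite Rinv_0. lra.
  - rewrite !dbar_eq by lia.
    assert (Ssum (fun i => d (Nat.iter i T x) (Nat.iter i T z)) (S k) <=
            Ssum (fun i => d (Nat.iter i T x) (Nat.iter i T y)) (S k) + INR (S k) * eta).
    { rewrite <- Ssum_const, <- Ssum_plus. apply Ssum_le. intros i hi.
      specialize (h i hi). specialize (Htri (Nat.iter i T x) (Nat.iter i T y) (Nat.iter i T z)). lra. }
    assert (0 < INR (S k)) by (apply lt_0_INR; lia).
    assert (0 < / INR (S k)) by (apply Rinv_0_lt_compat; auto).
    apply Rmult_le_compat_l with (r := / INR (S k)) in H; [|lra].
    rewrite Rmult_plus_distr_l in H. rewrite <- Rmult_assoc, Rinv_l in H by lra. lra.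
Qed.

Lemma iter_cont i y eta : 0 < eta -> exists r, 0 < r /\ forall z, d y z < r ->
  d (Nat.iter i T y) (Nat.iter i T z) < eta.
Proof.
  revert eta. induction i; intros eta he; simpl.
  - exists eta; auto.
  - destruct (Hcont (Nat.iter i T y) eta he) as [r1 [hr1 H1]].
    destruct (IHi r1 hr1) as [r2 [hr2 H2]]. exists r2; split; auto.
Qed.

Lemma near M y eta : 0 < eta -> exists r, 0 < r /\ forall z, d y z < r ->
  forall i, (i < M)%nat -> d (Nat.iter i T y) (Nat.iter i T z) < eta.
Proof.
  intro he. induction M.
  - exists 1; split. lra. intros; lia.
  - destruct IHM as [r1 [h1 H1]]. destruct (iter_cont M y eta he) as [r2 [h2 H2]].
    exists (Rmin r1 r2); split. apply Rmin_pos; auto.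
    intros z hz i hi. destruct (Nat.eq_dec i M) as [->|ne].
    apply H2. eapply Rlt_le_trans; [exact hz|apply Rmin_r].
    apply H1; [eapply Rlt_le_trans; [exact hz|apply Rmin_l]|lia].
Qed.

Lemma open_ball_gen (rho : nat -> X -> X -> R) n e F :
  (forall x y, rho n x y < e -> exists M eta, 0 < eta /\ forall z,
     (forall i, (i < M)%nat -> d (Nat.iter i T y) (Nat.iter i T z) < eta) -> rho n x z < e) ->
  Defs.open_set X d (ball_union X rho n e F).
Proof.
  intros H y [x [hx hxy]]. destruct (H x y hxy) as [M [eta [he HM]]].
  destruct (near M y eta he) as [r [hr Hr]]. exists r; split; auto.
  intros z hz. exists x; split; auto.
Qed.

Lemma open_ball_dbar n e F : Defs.open_set X d (ball_union X (dbar X d T) n e F).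
Proof.
  apply open_ball_gen. intros x y h. exists n, ((e - dbar X d T n x y) / 2). split. lra.
  intros z hz. assert (H := dbar_close n x y z ((e - dbar X d T n x y) / 2)). 
  assert (dbar X d T n x z <= dbar X d T n x y + (e - dbar X d T n x y) / 2) by (apply H; auto; lra). lra.
Qed.

Lemma open_ball_dhat n e F : Defs.open_set X d (ball_union X (dhat X d T) n e F).
Proof.
  apply open_ball_gen. intros x y h. exists (S n), ((e - dhat X d T n x y) / 2). split. lra.
  intros z hz. apply dhat_lt.
  assert (forall k, (1 <= k <= n)%nat \/ k = 1%nat -> dbar X d T k x z < e).
  { intros k hk. assert (H := dbar_close k x y z ((e - dhat X d T n x y) / 2)).
    assert (dbar X d T k x z <= dbar X d T k x y + (e - dhat X d T n x y) / 2).
    { apply H. lra. intros i hi; apply hz. destruct hk; lia. }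
    assert (H1 := dhat_ge n x y k hk). lra. }
  split; auto.
Qed.

Lemma open_pre A : Defs.open_set X d A -> Defs.open_set X d (fun x => A (T x)).
Proof.
  intros HA x hx. destruct (HA _ hx) as [r [hr H]].
  destruct (Hcont x r hr) as [r2 [h2 H2]]. exists r2; split; auto.
Qed.

Lemma open_iter j A : Defs.open_set X d A -> Defs.open_set X d (fun x => A (Nat.iter j T x)).
Proof.
  revert A; induction j; intros A HA; simpl; auto.
  apply (IHj (fun y => A (T y))). apply open_pre; auto.
Qed.

End Top.

Definition ind (P : Prop) : nat := if excluded_middle_informative P then 1%nat else 0%nat.

Lemma ind_T (P : Prop) : P -> ind P = 1%nat.
Proof. intro h; unfold ind; destruct (excluded_middle_informative P); tauto. Qed.
Lemma ind_F (P : Prop) : ~ P -> ind P = 0%nat.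
Proof. intro h; unfold ind; destruct (excluded_middle_informative P); tauto. Qed.
Lemma ind_le (P Q : Prop) : (P -> Q) -> (ind P <= ind Q)%nat.
Proof. intro h; unfold ind; destruct (excluded_middle_informative P); destruct (excluded_middle_informative Q); tauto || lia. Qed.
Lemma ind_le1 P : (ind P <= 1)%nat.
Proof. unfold ind; destruct (excluded_middle_informative P); lia. Qed.

Fixpoint cntN (Q : nat -> Prop) (N : nat) : nat :=
  match N with O => O | S N => (cntN Q N + ind (Q N))%nat end.

Fixpoint cntI (Q : nat -> Prop) (s L : nat) : nat :=
  match L with O => O | S L => (ind (Q s) + cntI Q (S s) L)%nat end.

Lemma cntI_split Q s a b : cntI Q s (a + b) = (cntI Q s a + cntI Q (s + a) b)%nat.
Proof.
  revert s; induction a; intro s; simpl. rewrite Nat.add_0_r; auto.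
  rewrite IHa. replace (S s + a)%nat with (s + S a)%nat by lia. lia.
Qed.

Lemma cntI_le Q s L : (cntI Q s L <= L)%nat.
Proof. revert s; induction L; intro s; simpl. lia. specialize (IHL (S s)). assert (h := ind_le1 (Q s)). lia. Qed.

Lemma cntN_I Q N : cntN Q N = cntI Q 0 N.
Proof.
  induction N; [reflexivity|]; simpl cntN. rewrite IHN. replace (S N) with (N + 1)%nat by lia.
  rewrite cntI_split. simpl. lia.
Qed.

Lemma cntN_mono Q1 Q2 N : (forall j, (j < N)%nat -> Q1 j -> Q2 j) -> (cntN Q1 N <= cntN Q2 N)%nat.
Proof.
  induction N; intro h; simpl. lia.
  assert (h1 := IHN (fun j hj => h j ltac:(lia))). assert (h2 := ind_le (Q1 N) (Q2 N) (h N ltac:(lia))). lia.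
Qed.

Lemma cntN_zero Q N : (forall j, (j < N)%nat -> ~ Q j) -> cntN Q N = 0%nat.
Proof.
  induction N; intro h; simpl; auto. rewrite IHN by (intros; apply h; lia). rewrite ind_F; auto.
Qed.

Lemma cntN_pos Q N j : (j < N)%nat -> Q j -> (1 <= cntN Q N)%nat.
Proof.
  induction N; intros hj q; simpl. lia.
  destruct (Nat.eq_dec j N). subst. rewrite ind_T; auto. lia.
  assert (h := IHN ltac:(lia) q). lia.
Qed.

Lemma Ssum_front f n : Ssum f (S n) = f 0%nat + Ssum (fun i => f (S i)) n.
Proof. replace (S n) with (1 + n)%nat by lia. rewrite Ssum_add. simpl. ring. Qed.

Section Sun.
Variable a : nat -> R.
Hypothesis Ha : forall i, 0 <= a i.
Variable e : R.
Hypothesis He : 0 < e.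
Variable n : nat.
Definition badj (j : nat) : Prop := exists k, (1 <= k)%nat /\ (j + k <= n)%nat /\
  e * INR k <= Ssum (fun i => a (j + i)%nat) k.

Lemma Ssum_nonneg f m : (forall i, 0 <= f i) -> 0 <= Ssum f m.
Proof. intro h; induction m; simpl. lra. specialize (h m); lra. Qed.

Lemma sun : forall L s, (s + L = n)%nat -> e * INR (cntI badj s L) <= Ssum (fun i => a (s + i)%nat) L.
Proof.
  intro L. induction L as [L IH] using (well_founded_induction lt_wf).
  intros s hs. destruct L as [|L'].
  - simpl. lra.
  - destruct (classic (badj s)) as [hb|hb].
    + destruct hb as [k [hk1 [hk2 hk3]]].
      replace (S L') with (k + (S L' - k))%nat by lia.
      rewrite cntI_split, Ssum_add, plus_INR, Rmult_plus_distr_l.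
      assert (h1 := cntI_le badj s k). apply le_INR in h1.
      assert (h2 := IH (S L' - k)%nat ltac:(lia) (s + k)%nat ltac:(lia)).
      rewrite (Ssum_ext (fun i => a (s + (k + i))%nat) (fun i => a (s + k + i)%nat)) by (intros; f_equal; lia).
      nra.
    + rewrite Ssum_front. simpl cntI. rewrite ind_F by auto. simpl plus.
      assert (h2 := IH L' ltac:(lia) (S s) ltac:(lia)).
      rewrite (Ssum_ext (fun i => a (s + S i)%nat) (fun i => a (S s + i)%nat)) by (intros; f_equal; lia).
      specialize (Ha (s + 0)%nat). lra.
Qed.
End Sun.

Section Count.
Variable X : Type.
Variable d : X -> X -> R.
Variable mu : (X -> Prop) -> R.
Hypothesis Hmu : borel_prob_measure X d mu.

Lemma borel_fin_union (E : nat -> X -> Prop) j : (forall i, borel X d (E i)) ->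
  borel X d (fun x => exists i, (i < j)%nat /\ E i x).
Proof.
  intro hE. apply borel_union. intro i. destruct (lt_dec i j) as [h|h].
  - apply borel_ext with (E i); auto. intro; tauto.
  - apply borel_ext with (fun _ => False). apply borel_empty. intro; tauto.
Qed.

Lemma disj_sum (F : nat -> X -> Prop) N : (forall i, borel X d (F i)) ->
  (forall i j x, (i < j)%nat -> F i x -> F j x -> False) ->
  Ssum (fun j => mu (F j)) N = mu (fun x => exists j, (j < N)%nat /\ F j x).
Proof.
  intros hF hd. induction N; simpl.
  - symmetry. rewrite <- (mu_empty X d mu Hmu). apply mu_ext. intro x; split. intros [j [h _]]; lia. tauto.
  - rewrite IHN. rewrite <- (mu_add X d mu Hmu); auto using borel_fin_union.
    + apply mu_ext. intro x; split.
      * intros [[j [hj h]]|h]. exists j; split; auto. exists N; auto.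
      * intros [j [hj h]]. destruct (Nat.eq_dec j N). subst; auto. left; exists j; split; auto; lia.
    + intros x [j [hj h1]] h2. eapply hd; eauto.
Qed.

Lemma count_nat : forall b N (E : nat -> X -> Prop) U, borel X d U -> (forall j, borel X d (E j)) ->
  (forall j x, E j x -> U x) -> (forall x, U x -> (cntN (fun j => E j x) N <= b)%nat) ->
  Ssum (fun j => mu (E j)) N <= INR b * mu U.
Proof.
  intro b; induction b; intros N E U hU hE hsub hc.
  - rewrite (Ssum_ext _ (fun _ => 0)). rewrite Ssum_const. simpl; lra.
    intros j hj. rewrite <- (mu_empty X d mu Hmu). apply mu_ext. intro x; split; [|tauto].
    intro h. assert (h1 := cntN_pos (fun j => E j x) N j hj h). specialize (hc x (hsub _ _ h)). lia.
  - set (F := fun j x => E j x /\ ~ (exists i, (i < j)%nat /\ E i x)).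
    set (E' := fun j x => E j x /\ (exists i, (i < j)%nat /\ E i x)).
    assert (hF : forall j, borel X d (F j)) by (intro; apply borel_and; auto; apply borel_not, borel_fin_union; auto).
    assert (hE' : forall j, borel X d (E' j)) by (intro; apply borel_and; auto; apply borel_fin_union; auto).
    assert (split : forall j, mu (E j) = mu (F j) + mu (E' j)).
    { intro j. rewrite <- (mu_add X d mu Hmu); auto. apply mu_ext. intro x; unfold F, E'; tauto.
      intros x [_ h1] [_ h2]; tauto. }
    rewrite (Ssum_ext _ (fun j => mu (F j) + mu (E' j))) by (intros; apply split).
    rewrite Ssum_plus.
    assert (h1 : Ssum (fun j => mu (F j)) N <= mu U).
    { rewrite disj_sum; auto.
      - apply (mu_mono X d mu Hmu); auto. apply borel_union. intro j.
        destruct (lt_dec j N). apply borel_ext with (F j); auto. intro; tauto.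
        apply borel_ext with (fun _ => False). apply borel_empty. intro; tauto.
        intros x [j [_ [h _]]]; eauto.
      - intros i j x hij [h1 _] [_ h2]. apply h2; exists i; auto. }
    assert (h2 : Ssum (fun j => mu (E' j)) N <= INR b * mu U).
    { apply IHb; auto. intros j x [h _]; eauto.
      intros x hx. specialize (hc x hx).
      destruct (classic (exists i, (i < N)%nat /\ E i x)) as [[i [hi hei]]|hn].
      + (* remove first occurrence *)
        assert (key : forall M, (cntN (fun j => E' j x) M + ind (exists i, (i < M)%nat /\ E i x))%nat
                               = cntN (fun j => E j x) M).
        { induction M; simpl. rewrite ind_F. auto. intros [i' [h _]]; lia.
          rewrite <- IHM.
          destruct (classic (exists i, (i < M)%nat /\ E i x)) as [hy|hy].
          - rewrite (ind_T (exists i, (i < S M)%nat /\ E i x)) by (destruct hy as [i' [? ?]]; exists i'; split; auto; lia).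
            rewrite (ind_T (exists i, (i < M)%nat /\ E i x)) by auto.
            destruct (classic (E M x)) as [hm|hm].
            + rewrite (ind_T (E' M x)) by (split; auto). rewrite (ind_T (E M x)) by auto. lia.
            + rewrite (ind_F (E' M x)) by (intros [h _]; auto). rewrite (ind_F (E M x)) by auto. lia.
          - rewrite (ind_F (exists i, (i < M)%nat /\ E i x)) by auto.
            rewrite (ind_F (E' M x)) by (intros [_ h]; auto).
            destruct (classic (E M x)) as [hm|hm].
            + rewrite (ind_T (E M x)) by auto. rewrite (ind_T (exists i, (i < S M)%nat /\ E i x)) by (exists M; split; auto). lia.
            + rewrite (ind_F (E M x)) by auto. rewrite (ind_F (exists i, (i < S M)%nat /\ E i x)). lia.
              intros [i' [q1 q2]]. destruct (Nat.eq_dec i' M). subst; auto. apply hy; exists i'; split; auto; lia. }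
        specialize (key N). rewrite ind_T in key by (exists i; auto). lia.
      + rewrite cntN_zero. lia. intros j hj [h _]. apply hn; exists j; auto. }
    rewrite S_INR. lra.
Qed.

Lemma count_real N (E : nat -> X -> Prop) U r : borel X d U -> (forall j, borel X d (E j)) ->
  (forall j x, E j x -> U x) -> (forall x, U x -> INR (cntN (fun j => E j x) N) <= r) -> 0 <= r ->
  Ssum (fun j => mu (E j)) N <= r * mu U.
Proof.
  intros hU hE hsub hc hr.
  destruct (base_Int_part r) as [b1 b2].
  assert (hz : (0 <= Int_part r)%Z).
  { apply le_IZR. assert (IZR (Int_part r) > -1) by lra. assert (-1 < Int_part r)%Z by (apply lt_IZR; lra). apply IZR_le; lia. }
  assert (hb : INR (Z.to_nat (Int_part r)) = IZR (Int_part r)).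
  { rewrite INR_IZR_INZ. rewrite Z2Nat.id; auto. }
  eapply Rle_trans. apply (count_nat (Z.to_nat (Int_part r))); eauto.
  - intros x hx. specialize (hc x hx). rewrite INR_IZR_INZ in hc.
    assert (Z.of_nat (cntN (fun j => E j x) N) < Int_part r + 1)%Z by (apply lt_IZR; rewrite plus_IZR; simpl; lra).
    lia.
  - rewrite hb. apply Rmult_le_compat_r. apply (mu_nonneg X d mu Hmu); auto. lra.
Qed.

End Count.

Lemma dedup {A : Type} (l : list A) : exists l', NoDup l' /\ (forall x, In x l' <-> In x l) /\ (length l' <= length l)%nat.
Proof.
  induction l as [|a l [l' [h1 [h2 h3]]]].
  - exists nil; simpl; repeat split; auto. constructor.
  - destruct (classic (In a l')) as [h|h].
    + exists l'; repeat split; auto. intro h4; apply h2 in h4; simpl; auto.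
      simpl; intros [<-|h4]; [auto|apply h2; auto]. simpl; lia.
    + exists (a :: l'); repeat split. constructor; auto.
      simpl; intros [<-|h4]; auto; right; apply h2; auto.
      simpl; intros [<-|h4]; auto; right; apply h2; auto. simpl; lia.
Qed.

Lemma Ssum_lt f m c : (1 <= m)%nat -> (forall j, (j < m)%nat -> f j < c) -> Ssum f m < INR m * c.
Proof.
  intros hm h. induction m as [|m IHm]. lia.
  destruct (Nat.eq_dec m 0) as [->|hm0].
  - simpl. specialize (h 0%nat ltac:(lia)). lra.
  - simpl Ssum. rewrite S_INR. assert (h1 := h m ltac:(lia)).
    assert (Ssum f m < INR m * c) by (apply IHm; [lia| intros j hj; apply h; lia]). lra.
Qed.

Section Main.
Variable X : Type.
Variable d : X -> X -> R.
Variable T : X -> X.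
Variable mu : (X -> Prop) -> R.
Hypothesis Hmetric : is_metric X d.
Hypothesis Hcont : continuous_map X d T.
Hypothesis Hmu : borel_prob_measure X d mu.
Hypothesis Hinv : invariant_measure X d T mu.

Let Htri : forall x y z, d x z <= d x y + d y z.
Proof. destruct Hmetric as [_ [_ [_ h]]]; exact h. Qed.
Let Hnn : forall x y, 0 <= d x y.
Proof. destruct Hmetric as [h _]; exact h. Qed.

Lemma inv_iter j B : Defs.open_set X d B -> mu (fun x => B (Nat.iter j T x)) = mu B.
Proof.
  revert B; induction j; intros B hB; simpl; auto.
  rewrite (IHj (fun y => B (T y))). apply Hinv. apply borel_open; auto.
  apply open_pre; auto.
Qed.

Lemma easy : bounded_complexity X (dhat X d T) mu -> bounded_complexity X (dbar X d T) mu.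
Proof.
  intros H eps he. destruct (H eps he) as [C [hC HC]]. exists C; split; auto.
  intros n hn. destruct (HC n hn) as [F [h1 [h2 h3]]]. exists F; repeat split; auto.
  eapply Rlt_le_trans; [exact h3|].
  apply (mu_mono X d mu Hmu). apply borel_open, open_ball_dhat; auto. apply borel_open, open_ball_dbar; auto.
  intros y [x [hx hxy]]. exists x; split; auto.
  assert (dbar X d T n x y <= dhat X d T n x y) by (apply dhat_ge; lia). lra.
Qed.

Lemma hard : bounded_complexity X (dbar X d T) mu -> bounded_complexity X (dhat X d T) mu.
Proof.
  intros H eps he.
  set (dl := eps * eps / (2 * (eps + 2))).
  assert (hdl : 0 < dl) by (unfold dl; apply Rdiv_lt_0_compat; nra).
  destruct (H dl hdl) as [C [hC HC]]. exists C; split; auto.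
  intros m hm.
  destruct (HC (2 * m)%nat ltac:(lia)) as [F [hF1 [hF2 hF3]]].
  set (U := ball_union X (dbar X d T) (2 * m) dl F) in *.
  set (B := fun j => ball_union X (dhat X d T) m eps (map (Nat.iter j T) F)).
  set (A := fun j x => B j (Nat.iter j T x)).
  set (E := fun j x => U x /\ ~ A j x).
  assert (hU : borel X d U) by (apply borel_open, open_ball_dbar; auto).
  assert (hBo : forall j, Defs.open_set X d (B j)) by (intro; apply open_ball_dhat; auto).
  assert (hA : forall j, borel X d (A j)) by (intro; apply borel_open, open_iter; auto).
  assert (hE : forall j, borel X d (E j)) by (intro; apply borel_and; auto; apply borel_not; auto).
  set (r := 2 * dl * INR m / eps).
  assert (hr : 0 <= r) by (unfold r; apply Rle_mult_inv_pos; [apply Rmult_le_pos; [lra|apply pos_INR]|lra]).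
  assert (hm' : 0 < INR m) by (apply lt_0_INR; lia).
  assert (hcnt : forall x, U x -> INR (cntN (fun j => E j x) m) <= r).
  { intros x [c [hc hcx]].
    set (a := fun i => d (Nat.iter i T c) (Nat.iter i T x)).
    assert (hsun := sun a (fun i => Hnn _ _) eps he (2 * m)%nat (2 * m)%nat 0%nat ltac:(lia)).
    rewrite (Ssum_ext (fun i => a (0 + i)%nat) a) in hsun by (intros; reflexivity).
    assert (hS : Ssum a (2 * m) < INR (2 * m) * dl).
    { rewrite dbar_eq in hcx by lia. fold a in hcx.
      assert (0 < INR (2 * m)) by (apply lt_0_INR; lia).
      apply Rmult_lt_compat_l with (r := INR (2 * m)) in hcx; auto.
      rewrite <- Rmult_assoc, Rinv_r in hcx by lra. lra. }
    assert (hle : (cntN (fun j => E j x) m <= cntI (badj a eps (2 * m)) 0 (2 * m))%nat).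
    { replace (2 * m)%nat with (m + m)%nat at 2 by lia. rewrite cntI_split. rewrite <- cntN_I.
      enough (cntN (fun j => E j x) m <= cntN (badj a eps (2 * m)) m)%nat by lia.
      apply cntN_mono. intros j hj [_ hnA]. apply NNPP. intro hnb. apply hnA.
      unfold A, B. exists (Nat.iter j T c). split. apply in_map; auto.
      apply dhat_lt; auto.
      assert (hk : forall k, (1 <= k <= m)%nat -> dbar X d T k (Nat.iter j T c) (Nat.iter j T x) < eps).
      { intros k hk. rewrite dbar_eq by lia.
        assert (~ (eps * INR k <= Ssum (fun i => a (j + i)%nat) k)).
        { intro h. apply hnb. exists k. repeat split; auto; lia. }
        rewrite (Ssum_ext _ (fun i => a (j + i)%nat)).
        2:{ intros i hi. unfold a. rewrite <- !iter_add. rewrite Nat.add_comm. reflexivity. }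
        assert (0 < INR k) by (apply lt_0_INR; lia).
        assert (Ssum (fun i => a (j + i)%nat) k < eps * INR k) by (apply Rnot_le_lt; auto).
        apply Rmult_lt_reg_l with (r := INR k); auto. rewrite <- Rmult_assoc, Rinv_r by lra. lra. }
      split; auto; apply hk; lia. }
    apply le_INR in hle. rewrite mult_INR in hS.
    apply Rmult_le_compat_l with (r := eps) in hle; [|lra].
    simpl INR in hS.
    unfold r. apply Rmult_le_reg_l with (r := eps); auto.
    replace (eps * (2 * dl * INR m / eps)) with (2 * dl * INR m) by (field; lra). lra. }
  assert (hsumE : Ssum (fun j => mu (E j)) m <= r * mu U).
  { apply (count_real X d mu Hmu); auto. intros j x [h _]; auto. }
  assert (hUAE : forall j, mu U <= mu (A j) + mu (E j)).
  { intro j. rewrite <- (mu_add X d mu Hmu); auto.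
    apply (mu_mono X d mu Hmu); auto. apply borel_or; auto.
    intros x hx. destruct (classic (A j x)); [left|right]; auto. unfold E; auto.
    intros x h1 [_ h2]; auto. }
  set (q := 2 * dl / eps).
  assert (hq : q + dl = eps / 2) by (unfold q, dl; field; lra).
  assert (hq1 : 0 < 1 - q).
  { unfold q, dl. replace (2 * (eps * eps / (2 * (eps + 2))) / eps) with (eps / (eps + 2)) by (field; lra).
    assert (eps / (eps + 2) < 1).
    { apply (Rmult_lt_reg_r (eps + 2)); [lra|]. unfold Rdiv. rewrite Rmult_assoc, Rinv_l, Rmult_1_r by lra. lra. }
    lra. }
  assert (hex : exists j, (j < m)%nat /\ (1 - q) * mu U <= mu (A j)).
  { apply NNPP. intro hn.
    assert (hall : forall j, (j < m)%nat -> mu (A j) < (1 - q) * mu U).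
    { intros j hj. apply Rnot_le_lt. intro h. apply hn. exists j; auto. }
    assert (h1 := Ssum_lt (fun j => mu (A j)) m ((1 - q) * mu U) ltac:(lia) hall).
    assert (h2 : Ssum (fun j => mu U) m <= Ssum (fun j => mu (A j) + mu (E j)) m) by (apply Ssum_le; auto).
    rewrite Ssum_plus, Ssum_const in h2.
    assert (r = q * INR m) by (unfold r, q; field; lra).
    assert (0 <= mu U) by (apply (mu_nonneg X d mu Hmu); auto).
    nra. }
  destruct hex as [j [hj hAj]].
  destruct (dedup (map (Nat.iter j T) F)) as [F' [hn [hin hlen]]].
  exists F'. repeat split; auto.
  - rewrite length_map in hlen. lia.
  - assert (mu (ball_union X (dhat X d T) m eps F') = mu (A j)).
    { unfold A. rewrite inv_iter by auto. apply mu_ext. intro y. unfold B, ball_union.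
      split; intros [z [hz1 hz2]]; exists z; split; auto; apply hin; auto. }
    rewrite H0. assert (0 <= q) by (unfold q; apply Rle_mult_inv_pos; lra).
    nra.
Qed.

End Main.

Theorem mainTheorem9 (X : Type) (d : X -> X -> R) (T : X -> X)
  (mu : (X -> Prop) -> R)
  (Hmetric : is_metric X d) (Hcompact : compact_space X d)
  (Hcont : continuous_map X d T)
  (Hmu : borel_prob_measure X d mu) (Hinv : invariant_measure X d T mu) :
  bounded_complexity X (dbar X d T) mu <-> bounded_complexity X (dhat X d T) mu.
Proof.
  split. apply hard; auto. apply easy; auto.
Qed.
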